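(* Let $\Gamma$ be a NoEff typing context, $\mathit{t},\mathit{t}'$ NoEff terms and $A$ a NoEff type. If $\Gamma \vdash \mathit{t} : A$ and $\mathit{t} \leadsto \mathit{t}'$, then $\Gamma \vdash \mathit{t}' : A$.
   Context: NoEff. Fix a signature $\Sigma$ assigning to each operation $\mathtt{Op}$ two closed well-formed NoEff types, $(\mathtt{Op}:A_1\to A_2)\in\Sigma$. Types $A,B ::= \alpha\mid\mathtt{Unit}\mid A\to B\mid A\Rrightarrow B\mid\mu\Rightarrow A\mid\mathtt{Comp}\,A\mid\forall\alpha.A$; coercion types $\mu ::= A\le B$. Coercions $\gamma ::= \omega\mid\langle\mathtt{Unit}\rangle\mid\langle\alpha\rangle\mid\gamma_1\to\gamma_2\mid\gamma_1\Rrightarrow\gamma_2\mid\mathtt{handToFun}(\gamma_1,\gamma_2)\mid\mathtt{funToHand}(\gamma_1,\gamma_2)\mid\forall\alpha.\gamma\mid\mu\Rightarrow\gamma\mid\mathtt{Comp}\,\gamma\mid\mathtt{return}\,\gamma\mid\mathtt{unsafe}\,\gamma$. Terms $\mathit{t} ::= x\mid\mathtt{unit}\mid\lambda(x{:}A).\mathit{t}\mid\mathit{t}_1\,\mathit{t}_2\mid\Lambda\alpha.\mathit{t}\mid\mathit{t}\,A\mid\Lambda(\omega{:}\mu).\mathit{t}\mid\mathit{t}\,\gamma\mid\mathit{t}\triangleright\gamma\mid\mathtt{return}\,\mathit{t}\mid h\mid\mathtt{let}\,x=\mathit{t}_1\,\mathtt{in}\,\mathit{t}_2\mid\mathtt{Op}\,\mathit{t}_1\,(y{:}B.\mathit{t}_2)\mid\mathtt{do}\,x\leftarrow\mathit{t}_1;\mathit{t}_2\mid\mathtt{with}\,\mathit{t}_h\,\mathtt{handle}\,\mathit{t}_c$;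 handlers $h ::= \{\mathtt{return}\,(x{:}A)\mapsto\mathit{t}_r,\mathtt{Op}_1\,x\,k\mapsto\mathit{t}_{\mathtt{Op}_1},\dots,\mathtt{Op}_n\,x\,k\mapsto\mathit{t}_{\mathtt{Op}_n}\}$ (distinct $\mathtt{Op}_i$, $\mathcal{O}=\{\mathtt{Op}_i\}$). Contexts $\Gamma ::= \epsilon\mid\Gamma,\alpha\mid\Gamma,x{:}A\mid\Gamma,\omega{:}\mu$; terms up to $\alpha$-equivalence, capture-avoiding substitution. Well-formedness: $\Gamma\vdash\alpha$ if $\alpha\in\Gamma$; $\Gamma\vdash\mathtt{Unit}$; $\Gamma\vdash A\to B$, $\Gamma\vdash A\Rrightarrow B$ if $\Gamma\vdash A$ and $\Gamma\vdash B$; $\Gamma\vdash\mathtt{Comp}\,A$ if $\Gamma\vdash A$; $\Gamma\vdash\forall\alpha.A$ if $\Gamma,\alpha\vdash A$; $\Gamma\vdash\mu\Rightarrow A$ if $\Gamma\vdash\mu$ and $\Gamma\vdash A$; $\Gamma\vdash A\le B$ if $\Gamma\vdash A$ and $\Gamma\vdash B$. Coercion typing $\Gamma\vdash\gamma:\mu$: $\omega:\mu$ if $(\omega{:}\mu)\in\Gamma$; $\langle\mathtt{Unit}\rangle:\mathtt{Unit}\le\mathtt{Unit}$; $\langle\alpha\rangle:\alpha\le\alpha$ if $\alpha\in\Gamma$; $\gamma_1\to\gamma_2:(A_1\to B_1)\le(A_2\to B_2)$ if $\gamma_1:A_2\le A_1$, $\gamma_2:B_1\le B_2$; $\gamma_1\Rrightarrow\gamma_2:(A_1\Rrightarrow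 B_1)\le(A_2\Rrightarrow B_2)$ if $\gamma_1:\mathtt{Comp}\,A_2\le\mathtt{Comp}\,A_1$, $\gamma_2:\mathtt{Comp}\,B_1\le\mathtt{Comp}\,B_2$; $\mathtt{handToFun}(\gamma_1,\gamma_2):(A_1\Rrightarrow B_1)\le(A_2\to B_2)$ if $\gamma_1:A_2\le A_1$, $\gamma_2:\mathtt{Comp}\,B_1\le B_2$; $\mathtt{funToHand}(\gamma_1,\gamma_2):(A_1\to B_1)\le(A_2\Rrightarrow B_2)$ if $\gamma_1:A_2\le A_1$, $\gamma_2:B_1\le\mathtt{Comp}\,B_2$; $\forall\alpha.\gamma:\forall\alpha.A\le\forall\alpha.B$ if $\Gamma,\alpha\vdash\gamma:A\le B$; $\mu\Rightarrow\gamma:(\mu\Rightarrow A)\le(\mu\Rightarrow B)$ if $\Gamma\vdash\mu$, $\gamma:A\le B$; $\mathtt{Comp}\,\gamma:\mathtt{Comp}\,A_1\le\mathtt{Comp}\,A_2$ if $\gamma:A_1\le A_2$; $\mathtt{return}\,\gamma:A_1\le\mathtt{Comp}\,A_2$ if $\gamma:A_1\le A_2$; $\mathtt{unsafe}\,\gamma:\mathtt{Comp}\,A_1\le A_2$ if $\gamma:A_1\le A_2$. Term typing $\Gamma\vdash\mathit{t}:A$: $x:A$ if $(x{:}A)\in\Gamma$; $\mathtt{unit}:\mathtt{Unit}$; $\lambda(x{:}A).\mathit{t}:A\to B$ if $\Gamma\vdash A$ and $\Gamma,x{:}A\vdash\mathit{t}:B$; $\Lambda\alpha.\mathit{t}:\forall\alpha.A$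 if $\Gamma,\alpha\vdash\mathit{t}:A$; $\mathit{t}\,A:B[A/\alpha]$ if $\Gamma\vdash A$ and $\mathit{t}:\forall\alpha.B$; $\mathit{t}\triangleright\gamma:B$ if $\mathit{t}:A$ and $\gamma:A\le B$; $h:A\Rrightarrow B$ if $\Gamma,x{:}A\vdash\mathit{t}_r:\mathtt{Comp}\,B$ and for each $\mathtt{Op}\in\mathcal{O}$, $(\mathtt{Op}:A_1\to A_2)\in\Sigma$ and $\Gamma,x{:}A_1,k{:}A_2\to\mathtt{Comp}\,B\vdash\mathit{t}_{\mathtt{Op}}:\mathtt{Comp}\,B$; $\Lambda(\omega{:}\mu).\mathit{t}:\mu\Rightarrow A$ if $\Gamma\vdash\mu$ and $\Gamma,\omega{:}\mu\vdash\mathit{t}:A$; $\mathit{t}\,\gamma:A$ if $\mathit{t}:\mu\Rightarrow A$, $\gamma:\mu$; $\mathit{t}_1\,\mathit{t}_2:B$ if $\mathit{t}_1:A\to B$, $\mathit{t}_2:A$; $\mathtt{let}\,x=\mathit{t}_1\,\mathtt{in}\,\mathit{t}_2:B$ if $\mathit{t}_1:A$, $\Gamma,x{:}A\vdash\mathit{t}_2:B$; $\mathtt{return}\,\mathit{t}:\mathtt{Comp}\,A$ if $\mathit{t}:A$; $\mathtt{Op}\,\mathit{t}_1\,(y{:}A_2.\mathit{t}_2):\mathtt{Comp}\,B$ if $(\mathtt{Op}:A_1\to A_2)\in\Sigma$, $\mathit{t}_1:A_1$, $\Gamma,y{:}A_2\vdash\mathit{t}_2:\mathtt{Comp}\,B$;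 $\mathtt{do}\,x\leftarrow\mathit{t}_1;\mathit{t}_2:\mathtt{Comp}\,B$ if $\mathit{t}_1:\mathtt{Comp}\,A$, $\Gamma,x{:}A\vdash\mathit{t}_2:\mathtt{Comp}\,B$; $\mathtt{with}\,\mathit{t}_h\,\mathtt{handle}\,\mathit{t}_c:\mathtt{Comp}\,B$ if $\mathit{t}_h:A\Rrightarrow B$, $\mathit{t}_c:\mathtt{Comp}\,A$. Values $\mathit{t}^R ::= \mathtt{unit}\mid h\mid\lambda(x{:}A).\mathit{t}\mid\Lambda\alpha.\mathit{t}\mid\Lambda(\omega{:}\mu).\mathit{t}\mid\mathit{t}^R\triangleright(\gamma_1\to\gamma_2)\mid\mathit{t}^R\triangleright(\gamma_1\Rrightarrow\gamma_2)\mid\mathit{t}^R\triangleright\mathtt{handToFun}(\gamma_1,\gamma_2)\mid\mathit{t}^R\triangleright\mathtt{funToHand}(\gamma_1,\gamma_2)\mid\mathit{t}^R\triangleright\forall\alpha.\gamma\mid\mathit{t}^R\triangleright(\mu\Rightarrow\gamma)\mid\mathtt{return}\,\mathit{t}^R\mid\mathtt{Op}\,\mathit{t}^R\,(y{:}A.\mathit{t})$. Step relation $\mathit{t}\leadsto\mathit{t}'$: congruences — if $\mathit{t}\leadsto\mathit{t}'$ then it steps in the positions $\square\,\mathit{t}_2$, $\mathit{t}^R\,\square$, $\square\,A$, $\square\,\gamma$, $\mathtt{let}\,x=\square\,\mathtt{in}\,\mathit{t}_2$, $\mathtt{return}\,\square$, $\mathtt{Op}\,\square\,(y{:}B.\mathit{t}_2)$,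 $\mathtt{do}\,x\leftarrow\square;\mathit{t}_2$, $\mathtt{with}\,\square\,\mathtt{handle}\,\mathit{t}_c$, $\mathtt{with}\,\mathit{t}^R_h\,\mathtt{handle}\,\square$, $\square\triangleright\gamma$. Reductions: $(\lambda(x{:}A).\mathit{t})\,\mathit{t}^R\leadsto\mathit{t}[\mathit{t}^R/x]$; $(\Lambda\alpha.\mathit{t})\,A\leadsto\mathit{t}[A/\alpha]$; $(\Lambda(\omega{:}\mu).\mathit{t})\,\gamma\leadsto\mathit{t}[\gamma/\omega]$; $\mathtt{let}\,x=\mathit{t}^R\,\mathtt{in}\,\mathit{t}\leadsto\mathit{t}[\mathit{t}^R/x]$; $\mathtt{do}\,x\leftarrow\mathtt{return}\,\mathit{t}^R;\mathit{t}\leadsto\mathit{t}[\mathit{t}^R/x]$; $\mathtt{do}\,x\leftarrow\mathtt{Op}\,\mathit{t}^R\,(y{:}A.\mathit{t}_1);\mathit{t}_2\leadsto\mathtt{Op}\,\mathit{t}^R\,(y{:}A.\,\mathtt{do}\,x\leftarrow\mathit{t}_1;\mathit{t}_2)$; $\mathtt{with}\,h\,\mathtt{handle}\,(\mathtt{return}\,\mathit{t}^R)\leadsto\mathit{t}_r[\mathit{t}^R/x]$; $\mathtt{with}\,h\,\mathtt{handle}\,(\mathtt{Op}\,\mathit{t}^R\,(y{:}B.\mathit{t}))\leadsto\mathit{t}_{\mathtt{Op}}[\mathit{t}^R/x,(\lambda(y{:}B).\mathtt{with}\,h\,\mathtt{handle}\,\mathit{t})/k]$ if $h$ has clause $\mathtt{Op}\,x\,k\mapsto\mathit{t}_{\mathtt{Op}}$,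 else $\leadsto\mathtt{Op}\,\mathit{t}^R\,(y{:}B.\,\mathtt{with}\,h\,\mathtt{handle}\,\mathit{t})$; $\mathit{t}^R\triangleright\langle\mathtt{Unit}\rangle\leadsto\mathit{t}^R$; $(\mathtt{return}\,\mathit{t}^R)\triangleright\mathtt{Comp}\,\gamma\leadsto\mathtt{return}\,(\mathit{t}^R\triangleright\gamma)$; $(\mathtt{Op}\,\mathit{t}^R\,(y{:}B.\mathit{t}))\triangleright\mathtt{Comp}\,\gamma\leadsto\mathtt{Op}\,\mathit{t}^R\,(y{:}B.\,\mathit{t}\triangleright\mathtt{Comp}\,\gamma)$; $\mathit{t}^R\triangleright\mathtt{return}\,\gamma\leadsto\mathtt{return}\,(\mathit{t}^R\triangleright\gamma)$; $(\mathtt{return}\,\mathit{t}^R)\triangleright\mathtt{unsafe}\,\gamma\leadsto\mathit{t}^R\triangleright\gamma$; $(\mathit{t}^R\triangleright(\gamma_1\to\gamma_2))\,\mathit{t}\leadsto(\mathit{t}^R\,(\mathit{t}\triangleright\gamma_1))\triangleright\gamma_2$; $\mathtt{with}\,(\mathit{t}^R_2\triangleright(\gamma_1\Rrightarrow\gamma_2))\,\mathtt{handle}\,\mathit{t}^R_1\leadsto(\mathtt{with}\,\mathit{t}^R_2\,\mathtt{handle}\,(\mathit{t}^R_1\triangleright\gamma_1))\triangleright\gamma_2$; $(\mathit{t}^R_1\triangleright\mathtt{handToFun}(\gamma_1,\gamma_2))\,\mathit{t}^R_2\leadsto(\mathtt{with}\,\mathit{t}^R_1\,\mathtt{handle}\,(\mathtt{return}\,(\mathit{t}^R_2\triangleright\gamma_1)))\triangleright\gamma_2$;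 $\mathtt{with}\,(\mathit{t}^R_2\triangleright\mathtt{funToHand}(\gamma_1,\gamma_2))\,\mathtt{handle}\,(\mathtt{Op}\,\mathit{t}^R_1\,(y{:}B.\mathit{t}))\leadsto\mathtt{Op}\,\mathit{t}^R_1\,(y{:}B.\,\mathtt{with}\,(\mathit{t}^R_2\triangleright\mathtt{funToHand}(\gamma_1,\gamma_2))\,\mathtt{handle}\,\mathit{t})$; $\mathtt{with}\,(\mathit{t}^R_2\triangleright\mathtt{funToHand}(\gamma_1,\gamma_2))\,\mathtt{handle}\,(\mathtt{return}\,\mathit{t}^R_1)\leadsto(\mathit{t}^R_2\,(\mathit{t}^R_1\triangleright\gamma_1))\triangleright\gamma_2$; $(\mathit{t}^R\triangleright\forall\alpha.\gamma)\,A\leadsto(\mathit{t}^R\,A)\triangleright\gamma[A/\alpha]$; $(\mathit{t}^R\triangleright(\mu\Rightarrow\gamma_1))\,\gamma_2\leadsto(\mathit{t}^R\,\gamma_2)\triangleright\gamma_1$. *)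

(* Defs.v *)
From mathcomp Require Import all_boot.
Set Implicit Arguments. Unset Strict Implicit. Unset Printing Implicit Defensive.

Inductive ty : Type :=
| TVar  : nat -> ty
| TUnit : ty
| TArr  : ty -> ty -> ty
| THand : ty -> ty -> ty
| TQual : ty -> ty -> ty -> ty    (* (A <= B) => C *)
| TComp : ty -> ty
| TAll  : ty -> ty.               (* forall alpha. A  (binds TVar 0) *)

(* coercion types  mu ::= A <= B *)
Definition cty := (ty * ty)%type.

Fixpoint ty_shift (c : nat) (A : ty) : ty :=
  match A with
  | TVar n => TVar (if n < c then n else n.+1)
  | TUnit => TUnit
  | TArr A B => TArr (ty_shift c A) (ty_shift c B)
  | THand A B => THand (ty_shift c A) (ty_shift c B)
  | TQual A B C => TQual (ty_shift c A) (ty_shift c B) (ty_shift c C)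
  | TComp A => TComp (ty_shift c A)
  | TAll A => TAll (ty_shift c.+1 A)
  end.

(* capture-avoiding substitution A[S/k] (and removal of variable k) *)
Fixpoint ty_subst (k : nat) (S : ty) (A : ty) : ty :=
  match A with
  | TVar n => if n < k then TVar n else if n == k then S else TVar n.-1
  | TUnit => TUnit
  | TArr A B => TArr (ty_subst k S A) (ty_subst k S B)
  | THand A B => THand (ty_subst k S A) (ty_subst k S B)
  | TQual A B C => TQual (ty_subst k S A) (ty_subst k S B) (ty_subst k S C)
  | TComp A => TComp (ty_subst k S A)
  | TAll A => TAll (ty_subst k.+1 (ty_shift 0 S) A)
  end.

Fixpoint wf_ty (n : nat) (A : ty) : Prop :=
  match A with
  | TVar a => a < n
  | TUnit => True
  | TArr A B => wf_ty n A /\ wf_ty n B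
  | THand A B => wf_ty n A /\ wf_ty n B
  | TQual A B C => (wf_ty n A /\ wf_ty n B) /\ wf_ty n C
  | TComp A => wf_ty n A
  | TAll A => wf_ty n.+1 A
  end.

Definition wf_cty (n : nat) (mu : cty) : Prop := wf_ty n mu.1 /\ wf_ty n mu.2.

Inductive co : Type :=
| CVar       : nat -> co
| CUnit      : co
| CTVar      : nat -> co
| CArr       : co -> co -> co
| CHand      : co -> co -> co
| CHandToFun : co -> co -> co
| CFunToHand : co -> co -> co
| CAll       : co -> co               (* forall alpha. g  (binds TVar 0) *)
| CQual      : ty -> ty -> co -> co
| CComp      : co -> co
| CRet       : co -> co
| CUnsafe    : co -> co.

Fixpoint co_shift_ty (c : nat) (g : co) : co :=
  match g with
  | CVar w => CVar w
  | CUnit => CUnit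
  | CTVar n => CTVar (if n < c then n else n.+1)
  | CArr g1 g2 => CArr (co_shift_ty c g1) (co_shift_ty c g2)
  | CHand g1 g2 => CHand (co_shift_ty c g1) (co_shift_ty c g2)
  | CHandToFun g1 g2 => CHandToFun (co_shift_ty c g1) (co_shift_ty c g2)
  | CFunToHand g1 g2 => CFunToHand (co_shift_ty c g1) (co_shift_ty c g2)
  | CAll g => CAll (co_shift_ty c.+1 g)
  | CQual A B g => CQual (ty_shift c A) (ty_shift c B) (co_shift_ty c g)
  | CComp g => CComp (co_shift_ty c g)
  | CRet g => CRet (co_shift_ty c g)
  | CUnsafe g => CUnsafe (co_shift_ty c g)
  end.

Fixpoint co_shift_co (c : nat) (g : co) : co :=
  match g with
  | CVar w => CVar (if w < c then w else w.+1)
  | CUnit => CUnit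
  | CTVar n => CTVar n
  | CArr g1 g2 => CArr (co_shift_co c g1) (co_shift_co c g2)
  | CHand g1 g2 => CHand (co_shift_co c g1) (co_shift_co c g2)
  | CHandToFun g1 g2 => CHandToFun (co_shift_co c g1) (co_shift_co c g2)
  | CFunToHand g1 g2 => CFunToHand (co_shift_co c g1) (co_shift_co c g2)
  | CAll g => CAll (co_shift_co c g)
  | CQual A B g => CQual A B (co_shift_co c g)
  | CComp g => CComp (co_shift_co c g)
  | CRet g => CRet (co_shift_co c g)
  | CUnsafe g => CUnsafe (co_shift_co c g)
  end.

(* Reflexivity coercion <A> for an arbitrary type A; this is what <alpha>
   becomes under a type substitution [A/alpha]. *)
Fixpoint refl_co (A : ty) : co :=
  match A with
  | TVar n => CTVar n
  | TUnit => CUnit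
  | TArr A B => CArr (refl_co A) (refl_co B)
  | THand A B => CHand (CComp (refl_co A)) (CComp (refl_co B))
  | TQual A B C => CQual A B (refl_co C)
  | TComp A => CComp (refl_co A)
  | TAll A => CAll (refl_co A)
  end.

Fixpoint co_subst_ty (k : nat) (S : ty) (g : co) : co :=
  match g with
  | CVar w => CVar w
  | CUnit => CUnit
  | CTVar n => if n < k then CTVar n else if n == k then refl_co S else CTVar n.-1
  | CArr g1 g2 => CArr (co_subst_ty k S g1) (co_subst_ty k S g2)
  | CHand g1 g2 => CHand (co_subst_ty k S g1) (co_subst_ty k S g2)
  | CHandToFun g1 g2 => CHandToFun (co_subst_ty k S g1) (co_subst_ty k S g2)
  | CFunToHand g1 g2 => CFunToHand (co_subst_ty k S g1) (co_subst_ty k S g2)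
  | CAll g => CAll (co_subst_ty k.+1 (ty_shift 0 S) g)
  | CQual A B g => CQual (ty_subst k S A) (ty_subst k S B) (co_subst_ty k S g)
  | CComp g => CComp (co_subst_ty k S g)
  | CRet g => CRet (co_subst_ty k S g)
  | CUnsafe g => CUnsafe (co_subst_ty k S g)
  end.

Fixpoint co_subst_co (k : nat) (h : co) (g : co) : co :=
  match g with
  | CVar w => if w < k then CVar w else if w == k then h else CVar w.-1
  | CUnit => CUnit
  | CTVar n => CTVar n
  | CArr g1 g2 => CArr (co_subst_co k h g1) (co_subst_co k h g2)
  | CHand g1 g2 => CHand (co_subst_co k h g1) (co_subst_co k h g2)
  | CHandToFun g1 g2 => CHandToFun (co_subst_co k h g1) (co_subst_co k h g2)
  | CFunToHand g1 g2 => CFunToHand (co_subst_co k h g1) (co_subst_co k h g2)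
  | CAll g => CAll (co_subst_co k (co_shift_ty 0 h) g)
  | CQual A B g => CQual A B (co_subst_co k h g)
  | CComp g => CComp (co_subst_co k h g)
  | CRet g => CRet (co_subst_co k h g)
  | CUnsafe g => CUnsafe (co_subst_co k h g)
  end.

Inductive tm (O : Type) : Type :=
| Var    : nat -> tm O
| UnitT  : tm O
| Lam    : ty -> tm O -> tm O
| App    : tm O -> tm O -> tm O
| TLam   : tm O -> tm O
| TApp   : tm O -> ty -> tm O
| CLam   : ty -> ty -> tm O -> tm O
| CApp   : tm O -> co -> tm O
| Cast   : tm O -> co -> tm O
| Ret    : tm O -> tm O
| Hand   : ty -> tm O -> clauses O -> tm O    (* {return (x:A) |-> t_r, clauses} *)
| Let    : tm O -> tm O -> tm O
| OpCall : O -> tm O -> ty -> tm O -> tm O    (* Op t1 (y:B. t2)     binds y in t2 *)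
| Do     : tm O -> tm O -> tm O
| With   : tm O -> tm O -> tm O               (* with t_h handle t_c *)
(* operation clauses  Op x k |-> t_Op : in t_Op, k is Var 0 and x is Var 1 *)
with clauses (O : Type) : Type :=
| CNil  : clauses O
| CCons : O -> tm O -> clauses O -> clauses O.

Arguments Var {O}. Arguments UnitT {O}. Arguments Lam {O}. Arguments App {O}.
Arguments TLam {O}. Arguments TApp {O}. Arguments CLam {O}. Arguments CApp {O}.
Arguments Cast {O}. Arguments Ret {O}. Arguments Hand {O}. Arguments Let {O}.
Arguments OpCall {O}. Arguments Do {O}. Arguments With {O}.
Arguments CNil {O}. Arguments CCons {O}.

Section TermOps.
Variable O : Type.

Fixpoint tm_shift_tm (c : nat) (t : tm O) : tm O :=
  match t with
  | Var n => Var (if n < c then n else n.+1)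
  | UnitT => UnitT
  | Lam A t => Lam A (tm_shift_tm c.+1 t)
  | App t1 t2 => App (tm_shift_tm c t1) (tm_shift_tm c t2)
  | TLam t => TLam (tm_shift_tm c t)
  | TApp t A => TApp (tm_shift_tm c t) A
  | CLam A B t => CLam A B (tm_shift_tm c t)
  | CApp t g => CApp (tm_shift_tm c t) g
  | Cast t g => Cast (tm_shift_tm c t) g
  | Ret t => Ret (tm_shift_tm c t)
  | Hand A tr cls => Hand A (tm_shift_tm c.+1 tr) (cl_shift_tm c cls)
  | Let t1 t2 => Let (tm_shift_tm c t1) (tm_shift_tm c.+1 t2)
  | OpCall o t1 B t2 => OpCall o (tm_shift_tm c t1) B (tm_shift_tm c.+1 t2)
  | Do t1 t2 => Do (tm_shift_tm c t1) (tm_shift_tm c.+1 t2)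
  | With t1 t2 => With (tm_shift_tm c t1) (tm_shift_tm c t2)
  end
with cl_shift_tm (c : nat) (cls : clauses O) : clauses O :=
  match cls with
  | CNil => CNil
  | CCons o t r => CCons o (tm_shift_tm c.+2 t) (cl_shift_tm c r)
  end.

Fixpoint tm_shift_ty (c : nat) (t : tm O) : tm O :=
  match t with
  | Var n => Var n
  | UnitT => UnitT
  | Lam A t => Lam (ty_shift c A) (tm_shift_ty c t)
  | App t1 t2 => App (tm_shift_ty c t1) (tm_shift_ty c t2)
  | TLam t => TLam (tm_shift_ty c.+1 t)
  | TApp t A => TApp (tm_shift_ty c t) (ty_shift c A)
  | CLam A B t => CLam (ty_shift c A) (ty_shift c B) (tm_shift_ty c t)
  | CApp t g => CApp (tm_shift_ty c t) (co_shift_ty c g)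
  | Cast t g => Cast (tm_shift_ty c t) (co_shift_ty c g)
  | Ret t => Ret (tm_shift_ty c t)
  | Hand A tr cls => Hand (ty_shift c A) (tm_shift_ty c tr) (cl_shift_ty c cls)
  | Let t1 t2 => Let (tm_shift_ty c t1) (tm_shift_ty c t2)
  | OpCall o t1 B t2 => OpCall o (tm_shift_ty c t1) (ty_shift c B) (tm_shift_ty c t2)
  | Do t1 t2 => Do (tm_shift_ty c t1) (tm_shift_ty c t2)
  | With t1 t2 => With (tm_shift_ty c t1) (tm_shift_ty c t2)
  end
with cl_shift_ty (c : nat) (cls : clauses O) : clauses O :=
  match cls with
  | CNil => CNil
  | CCons o t r => CCons o (tm_shift_ty c t) (cl_shift_ty c r)
  end.

Fixpoint tm_shift_co (c : nat) (t : tm O) : tm O :=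
  match t with
  | Var n => Var n
  | UnitT => UnitT
  | Lam A t => Lam A (tm_shift_co c t)
  | App t1 t2 => App (tm_shift_co c t1) (tm_shift_co c t2)
  | TLam t => TLam (tm_shift_co c t)
  | TApp t A => TApp (tm_shift_co c t) A
  | CLam A B t => CLam A B (tm_shift_co c.+1 t)
  | CApp t g => CApp (tm_shift_co c t) (co_shift_co c g)
  | Cast t g => Cast (tm_shift_co c t) (co_shift_co c g)
  | Ret t => Ret (tm_shift_co c t)
  | Hand A tr cls => Hand A (tm_shift_co c tr) (cl_shift_co c cls)
  | Let t1 t2 => Let (tm_shift_co c t1) (tm_shift_co c t2)
  | OpCall o t1 B t2 => OpCall o (tm_shift_co c t1) B (tm_shift_co c t2)
  | Do t1 t2 => Do (tm_shift_co c t1) (tm_shift_co c t2)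
  | With t1 t2 => With (tm_shift_co c t1) (tm_shift_co c t2)
  end
with cl_shift_co (c : nat) (cls : clauses O) : clauses O :=
  match cls with
  | CNil => CNil
  | CCons o t r => CCons o (tm_shift_co c t) (cl_shift_co c r)
  end.

Fixpoint tm_subst_tm (k : nat) (s : tm O) (t : tm O) : tm O :=
  match t with
  | Var n => if n < k then Var n else if n == k then s else Var n.-1
  | UnitT => UnitT
  | Lam A t => Lam A (tm_subst_tm k.+1 (tm_shift_tm 0 s) t)
  | App t1 t2 => App (tm_subst_tm k s t1) (tm_subst_tm k s t2)
  | TLam t => TLam (tm_subst_tm k (tm_shift_ty 0 s) t)
  | TApp t A => TApp (tm_subst_tm k s t) A
  | CLam A B t => CLam A B (tm_subst_tm k (tm_shift_co 0 s) t)
  | CApp t g => CApp (tm_subst_tm k s t) g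
  | Cast t g => Cast (tm_subst_tm k s t) g
  | Ret t => Ret (tm_subst_tm k s t)
  | Hand A tr cls => Hand A (tm_subst_tm k.+1 (tm_shift_tm 0 s) tr) (cl_subst_tm k s cls)
  | Let t1 t2 => Let (tm_subst_tm k s t1) (tm_subst_tm k.+1 (tm_shift_tm 0 s) t2)
  | OpCall o t1 B t2 =>
      OpCall o (tm_subst_tm k s t1) B (tm_subst_tm k.+1 (tm_shift_tm 0 s) t2)
  | Do t1 t2 => Do (tm_subst_tm k s t1) (tm_subst_tm k.+1 (tm_shift_tm 0 s) t2)
  | With t1 t2 => With (tm_subst_tm k s t1) (tm_subst_tm k s t2)
  end
with cl_subst_tm (k : nat) (s : tm O) (cls : clauses O) : clauses O :=
  match cls with
  | CNil => CNil
  | CCons o t r =>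
      CCons o (tm_subst_tm k.+2 (tm_shift_tm 0 (tm_shift_tm 0 s)) t) (cl_subst_tm k s r)
  end.

Fixpoint tm_subst_ty (k : nat) (S : ty) (t : tm O) : tm O :=
  match t with
  | Var n => Var n
  | UnitT => UnitT
  | Lam A t => Lam (ty_subst k S A) (tm_subst_ty k S t)
  | App t1 t2 => App (tm_subst_ty k S t1) (tm_subst_ty k S t2)
  | TLam t => TLam (tm_subst_ty k.+1 (ty_shift 0 S) t)
  | TApp t A => TApp (tm_subst_ty k S t) (ty_subst k S A)
  | CLam A B t => CLam (ty_subst k S A) (ty_subst k S B) (tm_subst_ty k S t)
  | CApp t g => CApp (tm_subst_ty k S t) (co_subst_ty k S g)
  | Cast t g => Cast (tm_subst_ty k S t) (co_subst_ty k S g)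
  | Ret t => Ret (tm_subst_ty k S t)
  | Hand A tr cls => Hand (ty_subst k S A) (tm_subst_ty k S tr) (cl_subst_ty k S cls)
  | Let t1 t2 => Let (tm_subst_ty k S t1) (tm_subst_ty k S t2)
  | OpCall o t1 B t2 => OpCall o (tm_subst_ty k S t1) (ty_subst k S B) (tm_subst_ty k S t2)
  | Do t1 t2 => Do (tm_subst_ty k S t1) (tm_subst_ty k S t2)
  | With t1 t2 => With (tm_subst_ty k S t1) (tm_subst_ty k S t2)
  end
with cl_subst_ty (k : nat) (S : ty) (cls : clauses O) : clauses O :=
  match cls with
  | CNil => CNil
  | CCons o t r => CCons o (tm_subst_ty k S t) (cl_subst_ty k S r)
  end.

Fixpoint tm_subst_co (k : nat) (h : co) (t : tm O) : tm O :=
  match t with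
  | Var n => Var n
  | UnitT => UnitT
  | Lam A t => Lam A (tm_subst_co k h t)
  | App t1 t2 => App (tm_subst_co k h t1) (tm_subst_co k h t2)
  | TLam t => TLam (tm_subst_co k (co_shift_ty 0 h) t)
  | TApp t A => TApp (tm_subst_co k h t) A
  | CLam A B t => CLam A B (tm_subst_co k.+1 (co_shift_co 0 h) t)
  | CApp t g => CApp (tm_subst_co k h t) (co_subst_co k h g)
  | Cast t g => Cast (tm_subst_co k h t) (co_subst_co k h g)
  | Ret t => Ret (tm_subst_co k h t)
  | Hand A tr cls => Hand A (tm_subst_co k h tr) (cl_subst_co k h cls)
  | Let t1 t2 => Let (tm_subst_co k h t1) (tm_subst_co k h t2)
  | OpCall o t1 B t2 => OpCall o (tm_subst_co k h t1) B (tm_subst_co k h t2)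
  | Do t1 t2 => Do (tm_subst_co k h t1) (tm_subst_co k h t2)
  | With t1 t2 => With (tm_subst_co k h t1) (tm_subst_co k h t2)
  end
with cl_subst_co (k : nat) (h : co) (cls : clauses O) : clauses O :=
  match cls with
  | CNil => CNil
  | CCons o t r => CCons o (tm_subst_co k h t) (cl_subst_co k h r)
  end.

Fixpoint cl_ops (cls : clauses O) : seq O :=
  match cls with CNil => [::] | CCons o _ r => o :: cl_ops r end.

Fixpoint cl_in (o : O) (t : tm O) (cls : clauses O) : Prop :=
  match cls with
  | CNil => False
  | CCons o' t' r => (o = o' /\ t = t') \/ cl_in o t r
  end.

End TermOps.

Fixpoint cl_find (O : eqType) (o : O) (cls : clauses O) : option (tm O) :=
  match cls with
  | CNil => None
  | CCons o' t r => if o == o' then Some t else cl_find o r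
  end.

(* A context Gamma is represented (de Bruijn style) by the
   number of type variables in scope, the list of coercion-variable
   declarations (most recent first) and the list of term-variable
   declarations (most recent first).  Extending with a type variable shifts
   the types of all earlier declarations. *)
Record ctx := Ctx { ctx_nty : nat; ctx_co : seq cty; ctx_tm : seq ty }.

Definition ext_ty (G : ctx) : ctx :=
  Ctx (ctx_nty G).+1
      [seq (ty_shift 0 mu.1, ty_shift 0 mu.2) | mu <- ctx_co G]
      [seq ty_shift 0 A | A <- ctx_tm G].
Definition ext_co (G : ctx) (mu : cty) : ctx := Ctx (ctx_nty G) (mu :: ctx_co G) (ctx_tm G).
Definition ext_tm (G : ctx) (A : ty) : ctx := Ctx (ctx_nty G) (ctx_co G) (A :: ctx_tm G).

Fixpoint lookup (T : Type) (l : seq T) (i : nat) : option T :=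
  match l, i with
  | [::], _ => None
  | x :: _, 0 => Some x
  | _ :: l, i.+1 => lookup l i
  end.

Definition wf_ty_ctx (G : ctx) (A : ty) : Prop := wf_ty (ctx_nty G) A.
Definition wf_cty_ctx (G : ctx) (mu : cty) : Prop := wf_cty (ctx_nty G) mu.

Inductive co_typing : ctx -> co -> cty -> Prop :=
| CT_Var G w mu : lookup (ctx_co G) w = Some mu -> co_typing G (CVar w) mu
| CT_Unit G : co_typing G CUnit (TUnit, TUnit)
| CT_TVar G a : a < ctx_nty G -> co_typing G (CTVar a) (TVar a, TVar a)
| CT_Arr G g1 g2 A1 A2 B1 B2 :
    co_typing G g1 (A2, A1) -> co_typing G g2 (B1, B2) ->
    co_typing G (CArr g1 g2) (TArr A1 B1, TArr A2 B2)
| CT_Hand G g1 g2 A1 A2 B1 B2 :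
    co_typing G g1 (TComp A2, TComp A1) -> co_typing G g2 (TComp B1, TComp B2) ->
    co_typing G (CHand g1 g2) (THand A1 B1, THand A2 B2)
| CT_HandToFun G g1 g2 A1 A2 B1 B2 :
    co_typing G g1 (A2, A1) -> co_typing G g2 (TComp B1, B2) ->
    co_typing G (CHandToFun g1 g2) (THand A1 B1, TArr A2 B2)
| CT_FunToHand G g1 g2 A1 A2 B1 B2 :
    co_typing G g1 (A2, A1) -> co_typing G g2 (B1, TComp B2) ->
    co_typing G (CFunToHand g1 g2) (TArr A1 B1, THand A2 B2)
| CT_All G g A B :
    co_typing (ext_ty G) g (A, B) -> co_typing G (CAll g) (TAll A, TAll B)
| CT_Qual G mA mB g A B :
    wf_cty_ctx G (mA, mB) -> co_typing G g (A, B) ->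
    co_typing G (CQual mA mB g) (TQual mA mB A, TQual mA mB B)
| CT_Comp G g A1 A2 :
    co_typing G g (A1, A2) -> co_typing G (CComp g) (TComp A1, TComp A2)
| CT_Ret G g A1 A2 :
    co_typing G g (A1, A2) -> co_typing G (CRet g) (A1, TComp A2)
| CT_Unsafe G g A1 A2 :
    co_typing G g (A1, A2) -> co_typing G (CUnsafe g) (TComp A1, A2).

(* Term typing  Gamma |- t : A, relative to a signature sig : O -> A1 * A2
   ((Op : A1 -> A2) in Sigma). *)
Inductive typing (O : eqType) (sig : O -> ty * ty) : ctx -> tm O -> ty -> Prop :=
| T_Var G x A : lookup (ctx_tm G) x = Some A -> typing sig G (Var x) A
| T_Unit G : typing sig G UnitT TUnit
| T_Lam G A B t :
    wf_ty_ctx G A -> typing sig (ext_tm G A) t B -> typing sig G (Lam A t) (TArr A B)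
| T_TLam G t A :
    typing sig (ext_ty G) t A -> typing sig G (TLam t) (TAll A)
| T_TApp G t A B :
    wf_ty_ctx G A -> typing sig G t (TAll B) -> typing sig G (TApp t A) (ty_subst 0 A B)
| T_Cast G t g A B :
    typing sig G t A -> co_typing G g (A, B) -> typing sig G (Cast t g) B
| T_Hand G A B tr cls :
    typing sig (ext_tm G A) tr (TComp B) ->
    uniq (cl_ops cls) ->
    (forall o tO, cl_in o tO cls ->
       typing sig (ext_tm (ext_tm G (sig o).1) (TArr (sig o).2 (TComp B))) tO (TComp B)) ->
    typing sig G (Hand A tr cls) (THand A B)
| T_CLam G mA mB t A :
    wf_cty_ctx G (mA, mB) -> typing sig (ext_co G (mA, mB)) t A ->
    typing sig G (CLam mA mB t) (TQual mA mB A)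
| T_CApp G t g mA mB A :
    typing sig G t (TQual mA mB A) -> co_typing G g (mA, mB) -> typing sig G (CApp t g) A
| T_App G t1 t2 A B :
    typing sig G t1 (TArr A B) -> typing sig G t2 A -> typing sig G (App t1 t2) B
| T_Let G t1 t2 A B :
    typing sig G t1 A -> typing sig (ext_tm G A) t2 B -> typing sig G (Let t1 t2) B
| T_Ret G t A : typing sig G t A -> typing sig G (Ret t) (TComp A)
| T_Op G o t1 t2 B :
    typing sig G t1 (sig o).1 -> typing sig (ext_tm G (sig o).2) t2 (TComp B) ->
    typing sig G (OpCall o t1 (sig o).2 t2) (TComp B)
| T_Do G t1 t2 A B :
    typing sig G t1 (TComp A) -> typing sig (ext_tm G A) t2 (TComp B) ->
    typing sig G (Do t1 t2) (TComp B)
| T_With G th tc A B :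
    typing sig G th (THand A B) -> typing sig G tc (TComp A) ->
    typing sig G (With th tc) (TComp B).

Inductive value (O : Type) : tm O -> Prop :=
| V_Unit : value UnitT
| V_Hand A tr cls : value (Hand A tr cls)
| V_Lam A t : value (Lam A t)
| V_TLam t : value (TLam t)
| V_CLam A B t : value (CLam A B t)
| V_CastArr v g1 g2 : value v -> value (Cast v (CArr g1 g2))
| V_CastHand v g1 g2 : value v -> value (Cast v (CHand g1 g2))
| V_CastHandToFun v g1 g2 : value v -> value (Cast v (CHandToFun g1 g2))
| V_CastFunToHand v g1 g2 : value v -> value (Cast v (CFunToHand g1 g2))
| V_CastAll v g : value v -> value (Cast v (CAll g))
| V_CastQual v A B g : value v -> value (Cast v (CQual A B g))
| V_Ret v : value v -> value (Ret v)
| V_Op o v B t : value v -> value (OpCall o v B t).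

Inductive step (O : eqType) : tm O -> tm O -> Prop :=
| S_App1 t1 t1' t2 : step t1 t1' -> step (App t1 t2) (App t1' t2)
| S_App2 v t2 t2' : value v -> step t2 t2' -> step (App v t2) (App v t2')
| S_TApp t t' A : step t t' -> step (TApp t A) (TApp t' A)
| S_CApp t t' g : step t t' -> step (CApp t g) (CApp t' g)
| S_Let t1 t1' t2 : step t1 t1' -> step (Let t1 t2) (Let t1' t2)
| S_Ret t t' : step t t' -> step (Ret t) (Ret t')
| S_Op o t1 t1' B t2 : step t1 t1' -> step (OpCall o t1 B t2) (OpCall o t1' B t2)
| S_Do t1 t1' t2 : step t1 t1' -> step (Do t1 t2) (Do t1' t2)
| S_With1 th th' tc : step th th' -> step (With th tc) (With th' tc)
| S_With2 vh tc tc' : value vh -> step tc tc' -> step (With vh tc) (With vh tc')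
| S_Cast t t' g : step t t' -> step (Cast t g) (Cast t' g)
| S_Beta A t v : value v -> step (App (Lam A t) v) (tm_subst_tm 0 v t)
| S_TBeta t A : step (TApp (TLam t) A) (tm_subst_ty 0 A t)
| S_CBeta mA mB t g : step (CApp (CLam mA mB t) g) (tm_subst_co 0 g t)
| S_LetV v t : value v -> step (Let v t) (tm_subst_tm 0 v t)
| S_DoRet v t : value v -> step (Do (Ret v) t) (tm_subst_tm 0 v t)
| S_DoOp o v B t1 t2 : value v ->
    step (Do (OpCall o v B t1) t2) (OpCall o v B (Do t1 (tm_shift_tm 1 t2)))
| S_HandRet A tr cls v : value v ->
    step (With (Hand A tr cls) (Ret v)) (tm_subst_tm 0 v tr)
| S_HandOp A tr cls o v B t tO : value v -> cl_find o cls = Some tO ->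
    step (With (Hand A tr cls) (OpCall o v B t))
         (tm_subst_tm 0 v
            (tm_subst_tm 0
               (tm_shift_tm 0 (Lam B (With (tm_shift_tm 0 (Hand A tr cls)) t))) tO))
| S_HandFwd A tr cls o v B t : value v -> cl_find o cls = None ->
    step (With (Hand A tr cls) (OpCall o v B t))
         (OpCall o v B (With (tm_shift_tm 0 (Hand A tr cls)) t))
| S_CastUnit v : value v -> step (Cast v CUnit) v
| S_CastCompRet v g : value v -> step (Cast (Ret v) (CComp g)) (Ret (Cast v g))
| S_CastCompOp o v B t g : value v ->
    step (Cast (OpCall o v B t) (CComp g)) (OpCall o v B (Cast t (CComp g)))
| S_CastRet v g : value v -> step (Cast v (CRet g)) (Ret (Cast v g))
| S_CastUnsafe v g : value v -> step (Cast (Ret v) (CUnsafe g)) (Cast v g)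
| S_AppCast v g1 g2 t : value v ->
    step (App (Cast v (CArr g1 g2)) t) (Cast (App v (Cast t g1)) g2)
| S_WithCastHand v2 g1 g2 v1 : value v2 -> value v1 ->
    step (With (Cast v2 (CHand g1 g2)) v1) (Cast (With v2 (Cast v1 g1)) g2)
| S_AppHandToFun v1 g1 g2 v2 : value v1 -> value v2 ->
    step (App (Cast v1 (CHandToFun g1 g2)) v2) (Cast (With v1 (Ret (Cast v2 g1))) g2)
| S_WithFunToHandOp v2 g1 g2 o v1 B t : value v2 -> value v1 ->
    step (With (Cast v2 (CFunToHand g1 g2)) (OpCall o v1 B t))
         (OpCall o v1 B (With (tm_shift_tm 0 (Cast v2 (CFunToHand g1 g2))) t))
| S_WithFunToHandRet v2 g1 g2 v1 : value v2 -> value v1 ->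
    step (With (Cast v2 (CFunToHand g1 g2)) (Ret v1)) (Cast (App v2 (Cast v1 g1)) g2)
| S_TAppCast v g A : value v ->
    step (TApp (Cast v (CAll g)) A) (Cast (TApp v A) (co_subst_ty 0 A g))
| S_CAppCast v mA mB g1 g2 : value v ->
    step (CApp (Cast v (CQual mA mB g1)) g2) (Cast (CApp v g2) g1).

(* Main.v *)
Require Import Defs.
From mathcomp Require Import all_boot.
From Stdlib Require Import Lia.
From mathcomp Require Import all_boot zify.
Set Implicit Arguments. Unset Strict Implicit.



Ltac dest_if := match goal with
 | |- context [if ?b then _ else _] =>
    lazymatch b with context [if _ then _ else _] => fail | _ => let E := fresh "E" in case E: b end
 end.
Ltac vsolve := repeat (first [ progress simpl | dest_if ]);
  try solve [exfalso; lia | assumption | reflexivity | congr TVar; lia | lia].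

Lemma wf_mono A n m : wf_ty n A -> n <= m -> wf_ty m A.
Proof. elim: A n m => [a| |A IA B IB|A IA B IB|A IA B IB C IC|A IA|A IA] n m /=; [ | done | | | | | ].
- lia.
- move=> [? ?] ?; split; eauto.
- move=> [? ?] ?; split; eauto.
- move=> [[? ?] ?] ?; split; [split|]; eauto.
- eauto.
- move=> ? ?; apply: IA; eauto.
Qed.

Lemma wf_shift A n c : wf_ty n A -> wf_ty n.+1 (ty_shift c A).
Proof. elim: A n c => [a| |A IA B IB|A IA B IB|A IA B IB C IC|A IA|A IA] n c /=; [ | done | | | | | ].
- vsolve.
- move=> [? ?]; split; eauto.
- move=> [? ?]; split; eauto.
- move=> [[? ?] ?]; split; [split|]; eauto.
- eauto.
- eauto.
Qed.

Lemma shift_closed A n c : wf_ty n A -> n <= c -> ty_shift c A = A.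
Proof. elim: A n c => [a| |A IA B IB|A IA B IB|A IA B IB C IC|A IA|A IA] n c /=; [ | done | | | | | ].
- move=> ? ?; vsolve.
- move=> [? ?] ?; congr TArr; eauto.
- move=> [? ?] ?; congr THand; eauto.
- move=> [[? ?] ?] ?; congr TQual; eauto.
- move=> ? ?; congr TComp; eauto.
- move=> ? ?; congr TAll; apply: IA; eauto.
Qed.

Lemma subst_closed A n k S : wf_ty n A -> n <= k -> ty_subst k S A = A.
Proof. elim: A n k S => [a| |A IA B IB|A IA B IB|A IA B IB C IC|A IA|A IA] n k S /=; [ | done | | | | | ].
- move=> ? ?; vsolve.
- move=> [? ?] ?; congr TArr; eauto.
- move=> [? ?] ?; congr THand; eauto.
- move=> [[? ?] ?] ?; congr TQual; eauto.
- move=> ? ?; congr TComp; eauto.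
- move=> ? ?; congr TAll; apply: IA; eauto.
Qed.

Lemma subst_wf A n k S : wf_ty n.+1 A -> wf_ty n S -> k <= n -> wf_ty n (ty_subst k S A).
Proof. elim: A n k S => [a| |A IA B IB|A IA B IB|A IA B IB C IC|A IA|A IA] n k S /=; [ | done | | | | | ].
- move=> ? ? ?; vsolve.
- move=> [? ?] ? ?; split; eauto.
- move=> [? ?] ? ?; split; eauto.
- move=> [[? ?] ?] ? ?; split; [split|]; eauto.
- eauto.
- move=> ? ? ?; apply: IA; [done | exact: wf_shift | lia].
Qed.

Lemma subst_shift A k S : ty_subst k S (ty_shift k A) = A.
Proof. elim: A k S => [a| |A IA B IB|A IA B IB|A IA B IB C IC|A IA|A IA] k S /=; [ | done | | | | | ].
- vsolve.
- by rewrite IA IB.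
- by rewrite IA IB.
- by rewrite IA IB IC.
- by rewrite IA.
- by rewrite IA.
Qed.

Lemma shift_shift A c d : c <= d -> ty_shift d.+1 (ty_shift c A) = ty_shift c (ty_shift d A).
Proof. elim: A c d => [a| |A IA B IB|A IA B IB|A IA B IB C IC|A IA|A IA] c d H /=; [ | done | | | | | ].
- vsolve.
- by rewrite IA // IB.
- by rewrite IA // IB.
- by rewrite IA // IB // IC.
- by rewrite IA.
- by rewrite IA.
Qed.

Lemma shift_subst_hi A c k S : k <= c ->
  ty_shift c (ty_subst k S A) = ty_subst k (ty_shift c S) (ty_shift c.+1 A).
Proof. elim: A c k S => [a| |A IA B IB|A IA B IB|A IA B IB C IC|A IA|A IA] c k S H /=; [ | done | | | | | ].
- vsolve.
- by rewrite IA // IB.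
- by rewrite IA // IB.
- by rewrite IA // IB // IC.
- by rewrite IA.
- by rewrite IA // shift_shift.
Qed.

Lemma shift_subst_lo A c k S : c <= k ->
  ty_shift c (ty_subst k S A) = ty_subst k.+1 (ty_shift c S) (ty_shift c A).
Proof. elim: A c k S => [a| |A IA B IB|A IA B IB|A IA B IB C IC|A IA|A IA] c k S H /=; [ | done | | | | | ].
- vsolve.
- by rewrite IA // IB.
- by rewrite IA // IB.
- by rewrite IA // IB // IC.
- by rewrite IA.
- by rewrite IA // shift_shift.
Qed.

Lemma subst_subst B j k A S : j <= k ->
  ty_subst k S (ty_subst j A B) = ty_subst j (ty_subst k S A) (ty_subst k.+1 (ty_shift j S) B).
Proof. elim: B j k A S => [a| |A IA B IB|A IA B IB|A IA B IB C IC|A IA|A IA] j k A0 S H /=; [ | done | | | | | ].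
- case: (ltngtP a j) => Ha.
  + vsolve.
  + case: (ltngtP a k.+1) => Hb.
    * vsolve.
    * vsolve.
    * subst a. rewrite /= ltnn eqxx subst_shift. vsolve.
  + subst a. vsolve.
- by rewrite IA // IB.
- by rewrite IA // IB.
- by rewrite IA // IB // IC.
- by rewrite IA.
- by rewrite IA // shift_subst_lo // shift_shift.
Qed.



Definition shp c (mu : cty) : cty := (ty_shift c mu.1, ty_shift c mu.2).
Definition sbp k S (mu : cty) : cty := (ty_subst k S mu.1, ty_subst k S mu.2).

Lemma lookup_map T U (f : T -> U) l n : lookup (map f l) n = omap f (lookup l n).
Proof. by elim: l n => [|x l IH] [|n] //=. Qed.

Definition Rsh {T} c (l' l : seq T) :=
  forall n, lookup l' (if n < c then n else n.+1) = lookup l n.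
Definition Rsb {T} k (x : T) (l' l : seq T) :=
  forall n, lookup l' n = if n < k then lookup l n else if n == k then Some x else lookup l n.-1.
Definition Rmap {T U} (f : T -> U) (l' : seq T) (l : seq U) :=
  forall n, lookup l n = omap f (lookup l' n).

Lemma Rsh0 T (x : T) l : Rsh 0 (x :: l) l.
Proof. by []. Qed.
Lemma Rsh_cons T c (x : T) l' l : Rsh c l' l -> Rsh c.+1 (x :: l') (x :: l).
Proof. move=> H [|n] //=. rewrite ltnS. have := H n. by case: ifP. Qed.
Lemma Rsh_map T U (f : T -> U) c l' l : Rsh c l' l -> Rsh c (map f l') (map f l).
Proof. move=> H n. by rewrite !lookup_map H. Qed.

Lemma Rsb0 T (x : T) l : Rsb 0 x (x :: l) l.
Proof. by move=> [|n]. Qed.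
Lemma Rsb_cons T k (x y : T) l' l : Rsb k x l' l -> Rsb k.+1 x (y :: l') (y :: l).
Proof. move=> H [|n] //=. rewrite H ltnS eqSS. case: ifP => // E1. case: ifP => // E.
  case: n H E E1 => [|n] H E E1 //=. by case: k {H} E E1. Qed.
Lemma Rsb_map T U (f : T -> U) k x l' l : Rsb k x l' l -> Rsb k (f x) (map f l') (map f l).
Proof. move=> H n. rewrite !lookup_map H. by case: ifP => // _; case: ifP. Qed.

Lemma Rmap_cons T U (f : T -> U) x l' l : Rmap f l' l -> Rmap f (x :: l') (f x :: l).
Proof. by move=> H [|n] //=. Qed.
Lemma Rmap_map T U V W (f : T -> U) (g : T -> V) (h : U -> W) (f2 : V -> W) l' l :
  Rmap f l' l -> (forall x, h (f x) = f2 (g x)) -> Rmap f2 (map g l') (map h l).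
Proof. move=> H E n. rewrite !lookup_map H. by case: lookup => //= x; rewrite E. Qed.
Lemma Rmap_lm T U (f : T -> U) l : Rmap f l (map f l).
Proof. move=> n; exact: lookup_map. Qed.

Lemma co_ctx G g mu : co_typing G g mu -> forall G', ctx_nty G' = ctx_nty G ->
  ctx_co G' = ctx_co G -> co_typing G' g mu.
Proof.
move=> Hct; elim: Hct => {G g mu} [G w mu H|G|G a H|G g1 g2 A1 A2 B1 B2 _ I1 _ I2|G g1 g2 A1 A2 B1 B2 _ I1 _ I2
  |G g1 g2 A1 A2 B1 B2 _ I1 _ I2|G g1 g2 A1 A2 B1 B2 _ I1 _ I2|G g A B _ I
  |G mA mB g A B W _ I|G g A1 A2 _ I|G g A1 A2 _ I|G g A1 A2 _ I] G' En Ec.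
- by constructor; rewrite Ec.
- constructor.
- by constructor; rewrite En.
- constructor; eauto.
- constructor; eauto.
- constructor; eauto.
- constructor; eauto.
- constructor; apply: I; by rewrite /= ?En ?Ec.
- constructor; last eauto. by rewrite /wf_cty_ctx En.
- constructor; eauto.
- constructor; eauto.
- constructor; eauto.
Qed.



Lemma co_shift_ty_typ G g mu : co_typing G g mu -> forall c G',
  ctx_nty G' = (ctx_nty G).+1 -> Rmap (shp c) (ctx_co G) (ctx_co G') ->
  co_typing G' (co_shift_ty c g) (shp c mu).
Proof.
move=> Hct; elim: Hct => {G g mu} [G w mu H|G|G a H|G g1 g2 A1 A2 B1 B2 _ I1 _ I2|G g1 g2 A1 A2 B1 B2 _ I1 _ I2
  |G g1 g2 A1 A2 B1 B2 _ I1 _ I2|G g1 g2 A1 A2 B1 B2 _ I1 _ I2|G g A B _ I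
  |G mA mB g A B W _ I|G g A1 A2 _ I|G g A1 A2 _ I|G g A1 A2 _ I] => c G' En Ec /=.
- by constructor; rewrite Ec H.
- constructor.
- constructor; rewrite En; case: ifP => _; lia.
- constructor; [exact: I1|exact: I2].
- constructor; [exact: I1|exact: I2].
- constructor; [exact: I1|exact: I2].
- constructor; [exact: I1|exact: I2].
- constructor; apply: (I c.+1 (ext_ty G')); first by rewrite /= En.
  apply: (Rmap_map Ec) => x. by rewrite /shp /= !shift_shift.
- constructor; last exact: I. move: W; rewrite /wf_cty_ctx /wf_cty /= En.
  by move=> [? ?]; split; apply: wf_shift.
- constructor; exact: I.
- constructor; exact: I.
- constructor; exact: I.
Qed.

Lemma co_shift_co_typ G g mu : co_typing G g mu -> forall c G',
  ctx_nty G' = ctx_nty G -> Rsh c (ctx_co G') (ctx_co G) ->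
  co_typing G' (co_shift_co c g) mu.
Proof.
move=> Hct; elim: Hct => {G g mu} [G w mu H|G|G a H|G g1 g2 A1 A2 B1 B2 _ I1 _ I2|G g1 g2 A1 A2 B1 B2 _ I1 _ I2
  |G g1 g2 A1 A2 B1 B2 _ I1 _ I2|G g1 g2 A1 A2 B1 B2 _ I1 _ I2|G g A B _ I
  |G mA mB g A B W _ I|G g A1 A2 _ I|G g A1 A2 _ I|G g A1 A2 _ I] => c G' En Ec /=.
- by constructor; rewrite Ec H.
- constructor.
- by constructor; rewrite En.
- constructor; [exact: I1|exact: I2].
- constructor; [exact: I1|exact: I2].
- constructor; [exact: I1|exact: I2].
- constructor; [exact: I1|exact: I2].
- constructor; apply: (I c (ext_ty G')); first by rewrite /= En.
  exact: Rsh_map.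
- constructor; last exact: I. by rewrite /wf_cty_ctx En.
- constructor; exact: I.
- constructor; exact: I.
- constructor; exact: I.
Qed.

Lemma refl_typ A G : wf_ty (ctx_nty G) A -> co_typing G (refl_co A) (A, A).
Proof.
elim: A G => [a| |A IA B IB|A IA B IB|A IA B IB C IC|A IA|A IA] G /=.
- by constructor.
- constructor.
- move=> [? ?]; constructor; eauto.
- move=> [? ?]; constructor; constructor; eauto.
- move=> [[? ?] ?]; constructor; last eauto. by split.
- move=> ?; constructor; eauto.
- move=> ?; constructor; apply: IA; done.
Qed.

Lemma co_subst_ty_typ G' g mu : co_typing G' g mu -> forall k S G,
  ctx_nty G' = (ctx_nty G).+1 -> k <= ctx_nty G -> wf_ty (ctx_nty G) S ->
  Rmap (sbp k S) (ctx_co G') (ctx_co G) ->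
  co_typing G (co_subst_ty k S g) (sbp k S mu).
Proof.
move=> H; elim: H => {G' g mu} [G w mu H|G|G a H|G g1 g2 A1 A2 B1 B2 _ I1 _ I2|G g1 g2 A1 A2 B1 B2 _ I1 _ I2
  |G g1 g2 A1 A2 B1 B2 _ I1 _ I2|G g1 g2 A1 A2 B1 B2 _ I1 _ I2|G g A B _ I
  |G mA mB g A B W _ I|G g A1 A2 _ I|G g A1 A2 _ I|G g A1 A2 _ I] k S G0 En Hk WS Ec /=.
- by constructor; rewrite Ec H.
- constructor.
- rewrite /sbp /=. case: ifP => E1; first by constructor; lia.
  case: ifP => E2; first by apply: refl_typ.
  constructor; lia.
- constructor; [exact: I1|exact: I2].
- constructor; [exact: I1|exact: I2].
- constructor; [exact: I1|exact: I2].
- constructor; [exact: I1|exact: I2].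
- constructor; apply: (I k.+1 _ (ext_ty G0)) => /=; first by rewrite En.
  + lia.
  + exact: wf_shift.
  + apply: (Rmap_map Ec) => x. by rewrite /shp /sbp /= !(shift_subst_lo _ _ (leq0n k)).
- constructor; last exact: I. move: W; rewrite /wf_cty_ctx /wf_cty /= En.
  by move=> [? ?]; split; apply: subst_wf.
- constructor; exact: I.
- constructor; exact: I.
- constructor; exact: I.
Qed.

Lemma co_subst_co_typ G' g mu : co_typing G' g mu -> forall k h nu G,
  ctx_nty G' = ctx_nty G -> Rsb k nu (ctx_co G') (ctx_co G) -> co_typing G h nu ->
  co_typing G (co_subst_co k h g) mu.
Proof.
move=> H; elim: H => {G' g mu} [G w mu H|G|G a H|G g1 g2 A1 A2 B1 B2 _ I1 _ I2|G g1 g2 A1 A2 B1 B2 _ I1 _ I2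
  |G g1 g2 A1 A2 B1 B2 _ I1 _ I2|G g1 g2 A1 A2 B1 B2 _ I1 _ I2|G g A B _ I
  |G mA mB g A B W _ I|G g A1 A2 _ I|G g A1 A2 _ I|G g A1 A2 _ I] k h nu G0 En Ec Hh /=.
- move: H; rewrite Ec. case: ifP => _; first by constructor.
  case: ifP => _; first by case=> <-.
  by constructor.
- constructor.
- by constructor; rewrite -En.
- constructor; [exact: I1|exact: I2].
- constructor; [exact: I1|exact: I2].
- constructor; [exact: I1|exact: I2].
- constructor; [exact: I1|exact: I2].
- constructor; apply: (I k _ (shp 0 nu) (ext_ty G0)) => /=; first by rewrite En.
  + exact: Rsb_map.
  + apply: co_shift_ty_typ; [exact: Hh | done | by move=> n; rewrite /= lookup_map].
- constructor; last exact: I. by rewrite /wf_cty_ctx -En.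
- constructor; exact: I.
- constructor; exact: I.
- constructor; exact: I.
Qed.



Fixpoint cl_map (O : Type) (f : tm O -> tm O) (cls : clauses O) : clauses O :=
  match cls with CNil => CNil | CCons o t r => CCons o (f t) (cl_map f r) end.

Lemma cl_ops_map (O : Type) f (cls : clauses O) : cl_ops (cl_map f cls) = cl_ops cls.
Proof. by elim: cls => //= o t r ->. Qed.
Lemma cl_in_map (O : Type) f (cls : clauses O) o t :
  cl_in o t (cl_map f cls) -> exists t', t = f t' /\ cl_in o t' cls.
Proof. elim: cls => //= o' t' r IH [[-> ->]|/IH [t0 [-> H]]]; eauto. Qed.

Lemma cl_shift_tmE (O : Type) c (cls : clauses O) : cl_shift_tm c cls = cl_map (tm_shift_tm c.+2) cls.
Proof. by elim: cls => //= o t r ->. Qed.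
Lemma cl_shift_tyE (O : Type) c (cls : clauses O) : cl_shift_ty c cls = cl_map (tm_shift_ty c) cls.
Proof. by elim: cls => //= o t r ->. Qed.
Lemma cl_shift_coE (O : Type) c (cls : clauses O) : cl_shift_co c cls = cl_map (tm_shift_co c) cls.
Proof. by elim: cls => //= o t r ->. Qed.
Lemma cl_subst_tmE (O : Type) k s (cls : clauses O) :
  cl_subst_tm k s cls = cl_map (tm_subst_tm k.+2 (tm_shift_tm 0 (tm_shift_tm 0 s))) cls.
Proof. by elim: cls => //= o t r ->. Qed.
Lemma cl_subst_tyE (O : Type) k S (cls : clauses O) : cl_subst_ty k S cls = cl_map (tm_subst_ty k S) cls.
Proof. by elim: cls => //= o t r ->. Qed.
Lemma cl_subst_coE (O : Type) k h (cls : clauses O) : cl_subst_co k h cls = cl_map (tm_subst_co k h) cls.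
Proof. by elim: cls => //= o t r ->. Qed.

Lemma wf0 A n : wf_ty 0 A -> wf_ty n A.
Proof. move=> H; exact: wf_mono H (leq0n n). Qed.

Lemma tw_tm (O : eqType) (sig : O -> ty * ty) G t A : typing sig G t A ->
  forall c G', ctx_nty G' = ctx_nty G -> ctx_co G' = ctx_co G ->
  Rsh c (ctx_tm G') (ctx_tm G) -> typing sig G' (tm_shift_tm c t) A.
Proof.
move=> Ht; elim: Ht => {G t A}
  [G x A H|G|G A B t W _ I|G t A _ I|G t A B W _ I|G t g A B _ I Hg
  |G A B tr cls _ Ir Hu _ Icl|G mA mB t A W _ I|G t g mA mB A _ I Hg
  |G t1 t2 A B _ I1 _ I2|G t1 t2 A B _ I1 _ I2|G t A _ I|G o t1 t2 B _ I1 _ I2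
  |G t1 t2 A B _ I1 _ I2|G th tc A B _ I1 _ I2] c G' En Ec Et /=.
- constructor. by rewrite Et.
- constructor.
- constructor; first by rewrite /wf_ty_ctx En.
  apply: I => //. exact: Rsh_cons.
- constructor. apply: I => /=; rewrite ?En ?Ec //. exact: Rsh_map.
- constructor; [by rewrite /wf_ty_ctx En | exact: I].
- econstructor; [exact: I | exact: co_ctx Hg _ En Ec].
- rewrite cl_shift_tmE. constructor.
  + apply: Ir => //. exact: Rsh_cons.
  + by rewrite cl_ops_map.
  + move=> o tO Hin0; case: (cl_in_map Hin0) => t' [-> Hin]. apply: (Icl o t' Hin c.+2 (ext_tm (ext_tm G' (sig o).1) (TArr (sig o).2 (TComp B)))) => //=. do 2 apply: Rsh_cons. exact: Et.
- constructor; first by rewrite /wf_cty_ctx En.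
  apply: I => //=. by rewrite Ec.
- econstructor; [exact: I | exact: co_ctx Hg _ En Ec].
- econstructor; [exact: I1 | exact: I2].
- econstructor; [exact: I1 | apply: I2 => //; exact: Rsh_cons].
- constructor; exact: I.
- constructor; [exact: I1 | apply: I2 => //; exact: Rsh_cons].
- econstructor; [exact: I1 | apply: I2 => //; exact: Rsh_cons].
- econstructor; [exact: I1 | exact: I2].
Qed.



Lemma tw_ty (O : eqType) (sig : O -> ty * ty)
  (sig_closed : forall o, wf_ty 0 (sig o).1 /\ wf_ty 0 (sig o).2) G t A : typing sig G t A ->
  forall c G', ctx_nty G' = (ctx_nty G).+1 -> Rmap (shp c) (ctx_co G) (ctx_co G') ->
  Rmap (ty_shift c) (ctx_tm G) (ctx_tm G') -> typing sig G' (tm_shift_ty c t) (ty_shift c A).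
Proof.
move=> Ht; elim: Ht => {G t A}
  [G x A H|G|G A B t W _ I|G t A _ I|G t A B W _ I|G t g A B _ I Hg
  |G A B tr cls _ Ir Hu _ Icl|G mA mB t A W _ I|G t g mA mB A _ I Hg
  |G t1 t2 A B _ I1 _ I2|G t1 t2 A B _ I1 _ I2|G t A _ I|G o t1 t2 B _ I1 _ I2
  |G t1 t2 A B _ I1 _ I2|G th tc A B _ I1 _ I2] c G' En Ec Et /=.
- constructor. by rewrite Et H.
- constructor.
- constructor; first by rewrite /wf_ty_ctx En; apply: wf_shift.
  apply: I => //. exact: Rmap_cons.
- constructor. apply: (I c.+1 (ext_ty G')) => /=; rewrite ?En //.
  + apply: (Rmap_map Ec) => x. by rewrite /shp /= !shift_shift.
  + apply: (Rmap_map Et) => x. by rewrite /shp /= !shift_shift.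
- rewrite shift_subst_hi //.
  constructor; [by rewrite /wf_ty_ctx En; apply: wf_shift | exact: I].
- econstructor; [exact: I | exact: (co_shift_ty_typ Hg En Ec)].
- rewrite cl_shift_tyE. constructor.
  + apply: (Ir c (ext_tm G' (ty_shift c A))) => //. exact: Rmap_cons.
  + by rewrite cl_ops_map.
  + move=> o tO Hin0; case: (cl_in_map Hin0) => t' [-> Hin].
    have [W1 W2] := sig_closed o.
    have E1 := @shift_closed _ 0 c W1 (leq0n c).
    have E2 := @shift_closed _ 0 c W2 (leq0n c).
    have R : Rmap (ty_shift c) (ctx_tm (ext_tm (ext_tm G (sig o).1) (TArr (sig o).2 (TComp B))))
      (ctx_tm (ext_tm (ext_tm G' (ty_shift c (sig o).1)) (ty_shift c (TArr (sig o).2 (TComp B))))).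
      by do 2 apply: Rmap_cons.
    have := Icl o t' Hin c (ext_tm (ext_tm G' (ty_shift c (sig o).1))
        (ty_shift c (TArr (sig o).2 (TComp B)))) En Ec R.
    by rewrite /= E1 E2.
- constructor.
  + move: W; rewrite /wf_cty_ctx /wf_cty /= En. by move=> [? ?]; split; apply: wf_shift.
  + apply: (I c (ext_co G' (shp c (mA, mB)))) => //=. exact: Rmap_cons.
- econstructor; [exact: I | exact: (co_shift_ty_typ Hg En Ec)].
- econstructor; [exact: I1 | exact: I2].
- econstructor; [exact: I1 | apply: I2 => //; exact: Rmap_cons].
- constructor; exact: I.
- have [W1 W2] := sig_closed o.
  have E1 := @shift_closed _ 0 c W1 (leq0n c).
  have E2 := @shift_closed _ 0 c W2 (leq0n c).
  rewrite E2. constructor.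
  + rewrite -E1. exact: I1.
  + have := I2 c (ext_tm G' (ty_shift c (sig o).2)). rewrite E2 /=. apply => //.
    have := Rmap_cons (sig o).2 Et. by rewrite E2.
- econstructor; [exact: I1 | apply: (I2 c (ext_tm G' (ty_shift c A))) => //; exact: Rmap_cons].
- econstructor; [exact: I1 | exact: I2].
Qed.

Lemma tw_co (O : eqType) (sig : O -> ty * ty) G t A : typing sig G t A ->
  forall c G', ctx_nty G' = ctx_nty G -> ctx_tm G' = ctx_tm G ->
  Rsh c (ctx_co G') (ctx_co G) -> typing sig G' (tm_shift_co c t) A.
Proof.
move=> Ht; elim: Ht => {G t A}
  [G x A H|G|G A B t W _ I|G t A _ I|G t A B W _ I|G t g A B _ I Hg
  |G A B tr cls _ Ir Hu _ Icl|G mA mB t A W _ I|G t g mA mB A _ I Hg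
  |G t1 t2 A B _ I1 _ I2|G t1 t2 A B _ I1 _ I2|G t A _ I|G o t1 t2 B _ I1 _ I2
  |G t1 t2 A B _ I1 _ I2|G th tc A B _ I1 _ I2] c G' En Et Ec /=.
- constructor. by rewrite Et.
- constructor.
- constructor; first by rewrite /wf_ty_ctx En.
  apply: (I c (ext_tm G' A)) => //=. by rewrite Et.
- constructor. apply: (I c (ext_ty G')) => /=; rewrite ?En ?Et //. exact: Rsh_map.
- constructor; [by rewrite /wf_ty_ctx En | exact: I].
- econstructor; [exact: I | exact: (co_shift_co_typ Hg En Ec)].
- rewrite cl_shift_coE. constructor.
  + apply: (Ir c (ext_tm G' A)) => //=. by rewrite Et.
  + by rewrite cl_ops_map.
  + move=> o tO Hin0; case: (cl_in_map Hin0) => t' [-> Hin].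
    apply: (Icl o t' Hin c (ext_tm (ext_tm G' (sig o).1) (TArr (sig o).2 (TComp B)))) => //=.
    by rewrite Et.
- constructor; first by rewrite /wf_cty_ctx En.
  apply: (I c.+1 (ext_co G' (mA, mB))) => //=. exact: Rsh_cons.
- econstructor; [exact: I | exact: (co_shift_co_typ Hg En Ec)].
- econstructor; [exact: I1 | exact: I2].
- econstructor; [exact: I1 | apply: I2 => //=; by rewrite Et].
- constructor; exact: I.
- constructor; [exact: I1 | apply: I2 => //=; by rewrite Et].
- econstructor; [exact: I1 | apply: I2 => //=; by rewrite Et].
- econstructor; [exact: I1 | exact: I2].
Qed.



Lemma ts_tm (O : eqType) (sig : O -> ty * ty)
  (sig_closed : forall o, wf_ty 0 (sig o).1 /\ wf_ty 0 (sig o).2) G' t A : typing sig G' t A ->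
  forall k s U G, ctx_nty G' = ctx_nty G -> ctx_co G' = ctx_co G ->
  Rsb k U (ctx_tm G') (ctx_tm G) -> typing sig G s U -> typing sig G (tm_subst_tm k s t) A.
Proof.
move=> Ht; elim: Ht => {G' t A}
  [G x A H|G|G A B t W _ I|G t A _ I|G t A B W _ I|G t g A B _ I Hg
  |G A B tr cls _ Ir Hu _ Icl|G mA mB t A W _ I|G t g mA mB A _ I Hg
  |G t1 t2 A B _ I1 _ I2|G t1 t2 A B _ I1 _ I2|G t A _ I|G o t1 t2 B _ I1 _ I2
  |G t1 t2 A B _ I1 _ I2|G th tc A B _ I1 _ I2] k s U G0 En Ec Et Hs /=.
- move: H; rewrite Et. case: ifP => _; first by constructor.
  case: ifP => _; first by case=> <-.
  by constructor.
- constructor.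
- constructor; first by rewrite /wf_ty_ctx -En.
  apply: (I k.+1 _ U (ext_tm G0 A)) => //; first exact: Rsb_cons.
  apply: (tw_tm Hs) => //; try exact: Rsh0.
- constructor. apply: (I k _ (ty_shift 0 U) (ext_ty G0)) => /=; rewrite ?En ?Ec //.
  + exact: Rsb_map.
  + apply: (tw_ty sig_closed Hs) => //; move=> n; by rewrite /= lookup_map.
- constructor; [by rewrite /wf_ty_ctx -En | exact: I Hs].
- econstructor; [exact: I Hs | exact: co_ctx Hg _ (esym En) (esym Ec)].
- rewrite cl_subst_tmE. constructor.
  + apply: (Ir k.+1 _ U (ext_tm G0 A)) => //; first exact: Rsb_cons.
    apply: (tw_tm Hs) => //; try exact: Rsh0.
  + by rewrite cl_ops_map.
  + move=> o tO Hin0; case: (cl_in_map Hin0) => t' [-> Hin].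
    apply: (Icl o t' Hin k.+2 _ U (ext_tm (ext_tm G0 (sig o).1) (TArr (sig o).2 (TComp B)))) => //.
    * do 2 apply: Rsb_cons. exact: Et.
    * apply: (tw_tm (G := ext_tm G0 (sig o).1)) => //; try exact: Rsh0.
      apply: (tw_tm Hs) => //; try exact: Rsh0.
- constructor; first by rewrite /wf_cty_ctx -En.
  apply: (I k _ U (ext_co G0 (mA, mB))) => //=; first by rewrite Ec.
  apply: (tw_co Hs) => //; try exact: Rsh0.
- econstructor; [exact: I Hs | exact: co_ctx Hg _ (esym En) (esym Ec)].
- econstructor; [exact: I1 Hs | exact: I2 Hs].
- econstructor; first exact: I1 Hs.
  apply: (I2 k.+1 _ U (ext_tm G0 A)) => //; first exact: Rsb_cons.
  apply: (tw_tm Hs) => //; try exact: Rsh0.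
- constructor; exact: I Hs.
- constructor; first exact: I1 Hs.
  apply: (I2 k.+1 _ U (ext_tm G0 (sig o).2)) => //; first exact: Rsb_cons.
  apply: (tw_tm Hs) => //; try exact: Rsh0.
- econstructor; first exact: I1 Hs.
  apply: (I2 k.+1 _ U (ext_tm G0 A)) => //; first exact: Rsb_cons.
  apply: (tw_tm Hs) => //; try exact: Rsh0.
- econstructor; [exact: I1 Hs | exact: I2 Hs].
Qed.

Lemma ts_ty (O : eqType) (sig : O -> ty * ty)
  (sig_closed : forall o, wf_ty 0 (sig o).1 /\ wf_ty 0 (sig o).2) G' t A : typing sig G' t A ->
  forall k S G, ctx_nty G' = (ctx_nty G).+1 -> k <= ctx_nty G -> wf_ty (ctx_nty G) S ->
  Rmap (sbp k S) (ctx_co G') (ctx_co G) -> Rmap (ty_subst k S) (ctx_tm G') (ctx_tm G) ->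
  typing sig G (tm_subst_ty k S t) (ty_subst k S A).
Proof.
move=> Ht; elim: Ht => {G' t A}
  [G x A H|G|G A B t W _ I|G t A _ I|G t A B W _ I|G t g A B _ I Hg
  |G A B tr cls _ Ir Hu _ Icl|G mA mB t A W _ I|G t g mA mB A _ I Hg
  |G t1 t2 A B _ I1 _ I2|G t1 t2 A B _ I1 _ I2|G t A _ I|G o t1 t2 B _ I1 _ I2
  |G t1 t2 A B _ I1 _ I2|G th tc A B _ I1 _ I2] k S G0 En Hk WS Ec Et /=.
- constructor. by rewrite Et H.
- constructor.
- constructor; first by move: W; rewrite /wf_ty_ctx En => W; apply: subst_wf.
  apply: (I k S (ext_tm G0 (ty_subst k S A))) => //. exact: Rmap_cons.
- constructor. apply: (I k.+1 _ (ext_ty G0)) => /=; rewrite ?En //.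
  + exact: wf_shift.
  + apply: (Rmap_map Ec) => x. by rewrite /shp /sbp /= !shift_subst_lo.
  + apply: (Rmap_map Et) => x. by rewrite shift_subst_lo.
- rewrite subst_subst //.
  constructor; first by move: W; rewrite /wf_ty_ctx En => W; apply: subst_wf.
  exact: (I k S G0).
- econstructor; [exact: (I k S G0) | exact: (co_subst_ty_typ Hg En Hk WS Ec)].
- rewrite cl_subst_tyE. constructor.
  + apply: (Ir k S (ext_tm G0 (ty_subst k S A))) => //. exact: Rmap_cons.
  + by rewrite cl_ops_map.
  + move=> o tO Hin0; case: (cl_in_map Hin0) => t' [-> Hin].
    have [W1 W2] := sig_closed o.
    have E1 := @subst_closed _ 0 k S W1 (leq0n k).
    have E2 := @subst_closed _ 0 k S W2 (leq0n k).
    have R : Rmap (ty_subst k S) (ctx_tm (ext_tm (ext_tm G (sig o).1) (TArr (sig o).2 (TComp B))))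
      (ctx_tm (ext_tm (ext_tm G0 (ty_subst k S (sig o).1)) (ty_subst k S (TArr (sig o).2 (TComp B))))).
      by do 2 apply: Rmap_cons.
    have := Icl o t' Hin k S (ext_tm (ext_tm G0 (ty_subst k S (sig o).1))
        (ty_subst k S (TArr (sig o).2 (TComp B)))) En Hk WS Ec R.
    by rewrite /= E1 E2.
- constructor.
  + move: W; rewrite /wf_cty_ctx /wf_cty /= En. by move=> [? ?]; split; apply: subst_wf.
  + apply: (I k S (ext_co G0 (sbp k S (mA, mB)))) => //=. exact: Rmap_cons.
- econstructor; [exact: (I k S G0) | exact: (co_subst_ty_typ Hg En Hk WS Ec)].
- econstructor; [exact: (I1 k S G0) | exact: (I2 k S G0)].
- econstructor; [exact: (I1 k S G0) |].
  apply: (I2 k S (ext_tm G0 (ty_subst k S A))) => //. exact: Rmap_cons.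
- constructor; exact: (I k S G0).
- have [W1 W2] := sig_closed o.
  have E1 := @subst_closed _ 0 k S W1 (leq0n k).
  have E2 := @subst_closed _ 0 k S W2 (leq0n k).
  rewrite E2. constructor.
  + rewrite -E1. exact: (I1 k S G0).
  + have R : Rmap (ty_subst k S) (ctx_tm (ext_tm G (sig o).2))
      (ctx_tm (ext_tm G0 (ty_subst k S (sig o).2))) by apply: Rmap_cons.
    have := I2 k S (ext_tm G0 (ty_subst k S (sig o).2)) En Hk WS Ec R.
    by rewrite E2.
- econstructor; [exact: (I1 k S G0) |].
  apply: (I2 k S (ext_tm G0 (ty_subst k S A))) => //. exact: Rmap_cons.
- econstructor; [exact: (I1 k S G0) | exact: (I2 k S G0)].
Qed.

Lemma ts_co (O : eqType) (sig : O -> ty * ty) G' t A : typing sig G' t A ->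
  forall k h nu G, ctx_nty G' = ctx_nty G -> ctx_tm G' = ctx_tm G ->
  Rsb k nu (ctx_co G') (ctx_co G) -> co_typing G h nu -> typing sig G (tm_subst_co k h t) A.
Proof.
move=> Ht; elim: Ht => {G' t A}
  [G x A H|G|G A B t W _ I|G t A _ I|G t A B W _ I|G t g A B _ I Hg
  |G A B tr cls _ Ir Hu _ Icl|G mA mB t A W _ I|G t g mA mB A _ I Hg
  |G t1 t2 A B _ I1 _ I2|G t1 t2 A B _ I1 _ I2|G t A _ I|G o t1 t2 B _ I1 _ I2
  |G t1 t2 A B _ I1 _ I2|G th tc A B _ I1 _ I2] k h nu G0 En Et Ec Hh /=.
- constructor. by rewrite -Et.
- constructor.
- constructor; first by rewrite /wf_ty_ctx -En.
  apply: (I k h nu (ext_tm G0 A)) => //=; first (by rewrite Et); by apply: (co_ctx Hh).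
- constructor. apply: (I k _ (shp 0 nu) (ext_ty G0)) => /=; rewrite ?En ?Et //.
  + exact: Rsb_map.
  + apply: co_shift_ty_typ; [exact: Hh | done | by move=> n; rewrite /= lookup_map].
- constructor; [by rewrite /wf_ty_ctx -En | exact: I Hh].
- econstructor; [exact: I Hh | exact: (co_subst_co_typ Hg En Ec Hh)].
- rewrite cl_subst_coE. constructor.
  + apply: (Ir k h nu (ext_tm G0 A)) => //=; first (by rewrite Et); by apply: (co_ctx Hh).
  + by rewrite cl_ops_map.
  + move=> o tO Hin0; case: (cl_in_map Hin0) => t' [-> Hin].
    apply: (Icl o t' Hin k h nu (ext_tm (ext_tm G0 (sig o).1) (TArr (sig o).2 (TComp B)))) => //=; first (by rewrite Et); by apply: (co_ctx Hh).
- constructor; first by rewrite /wf_cty_ctx -En.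
  apply: (I k.+1 _ nu (ext_co G0 (mA, mB))) => //=; first exact: Rsb_cons.
  apply: co_shift_co_typ; [exact: Hh | done | exact: Rsh0].
- econstructor; [exact: I Hh | exact: (co_subst_co_typ Hg En Ec Hh)].
- econstructor; [exact: I1 Hh | exact: I2 Hh].
- econstructor; first exact: I1 Hh.
  apply: (I2 k h nu (ext_tm G0 A)) => //=; first (by rewrite Et); by apply: (co_ctx Hh).
- constructor; exact: I Hh.
- constructor; first exact: I1 Hh.
  apply: (I2 k h nu (ext_tm G0 (sig o).2)) => //=; first (by rewrite Et); by apply: (co_ctx Hh).
- econstructor; first exact: I1 Hh.
  apply: (I2 k h nu (ext_tm G0 A)) => //=; first (by rewrite Et); by apply: (co_ctx Hh).
- econstructor; [exact: I1 Hh | exact: I2 Hh].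
Qed.



Lemma Rmap_sub0 S (l : seq cty) : Rmap (sbp 0 S) [seq (ty_shift 0 mu.1, ty_shift 0 mu.2) | mu <- l] l.
Proof. move=> n; rewrite lookup_map; case: lookup => //= [[a b]]. by rewrite /sbp /= !subst_shift. Qed.
Lemma Rmap_sub0' S (l : seq ty) : Rmap (ty_subst 0 S) [seq ty_shift 0 A | A <- l] l.
Proof. move=> n; rewrite lookup_map; case: lookup => //= a. by rewrite subst_shift. Qed.

Lemma cl_find_in (O : eqType) (o : O) cls t : cl_find o cls = Some t -> cl_in o t cls.
Proof. elim: cls => //= o' t' r IH. case: eqP => [-> [->]|_ /IH]; by [left|right]. Qed.

Theorem theorem7p1 (O : eqType) (sig : O -> ty * ty)
  (sig_closed : forall o, wf_ty 0 (sig o).1 /\ wf_ty 0 (sig o).2)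
  (G : ctx) (t t' : tm O) (A : ty) :
  typing sig G t A -> step t t' -> typing sig G t' A.
Proof.
have sub_tm0 : forall G U B (t s : tm O), typing sig (ext_tm G U) t B -> typing sig G s U ->
    typing sig G (tm_subst_tm 0 s t) B.
  move=> G0 U B t0 s H Hs. apply: (ts_tm sig_closed H) Hs => //. exact: Rsb0.
have weak0 : forall G X B (t : tm O), typing sig G t B -> typing sig (ext_tm G X) (tm_shift_tm 0 t) B.
  move=> G0 X B t0 H. apply: (tw_tm H) => //; try exact: Rsh0.
have sub_ty0 : forall G S B (t : tm O), typing sig (ext_ty G) t B -> wf_ty_ctx G S ->
    typing sig G (tm_subst_ty 0 S t) (ty_subst 0 S B).
  move=> G0 S B t0 H W. apply: (ts_ty sig_closed H) => //.
  exact: Rmap_sub0. exact: Rmap_sub0'.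
have sub_co0 : forall G mu B (t : tm O) h, typing sig (ext_co G mu) t B -> co_typing G h mu ->
    typing sig G (tm_subst_co 0 h t) B.
  move=> G0 mu B t0 h H Hh. apply: (ts_co H) Hh => //. exact: Rsb0.
have cosub0 : forall G g A B S, co_typing (ext_ty G) g (A, B) -> wf_ty_ctx G S ->
    co_typing G (co_subst_ty 0 S g) (ty_subst 0 S A, ty_subst 0 S B).
  move=> G0 g A1 B1 S H W. apply: (co_subst_ty_typ H) => //. exact: Rmap_sub0.
have coweak : forall G g mu X, co_typing G g mu -> co_typing (ext_tm G X) g mu.
  move=> G0 g mu X H. exact: (co_ctx H).
move=> Ht Hs; move: G A Ht; induction Hs; move=> G0 A0 Ht; inversion Ht; subst.
all: try (econstructor; eauto; fail).
all: repeat match goal with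
  | H : typing _ _ (Lam _ _) _ |- _ => inversion H; clear H; subst
  | H : typing _ _ (TLam _) _ |- _ => inversion H; clear H; subst
  | H : typing _ _ (CLam _ _ _) _ |- _ => inversion H; clear H; subst
  | H : typing _ _ (Ret _) _ |- _ => inversion H; clear H; subst
  | H : typing _ _ (OpCall _ _ _ _) _ |- _ => inversion H; clear H; subst
  | H : typing _ _ (Cast _ _) _ |- _ => inversion H; clear H; subst
  | H : typing _ _ (Hand _ _ _) _ |- _ => inversion H; clear H; subst
  | H : co_typing _ (_ _) _ |- _ => inversion H; clear H; subst
  | H : co_typing _ (_ _ _) _ |- _ => inversion H; clear H; subst
  | H : co_typing _ CUnit _ |- _ => inversion H; clear H; subst
  end.
all: try (repeat econstructor; eauto; fail).
- constructor; first eassumption. econstructor; first eassumption.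
  match goal with H : typing _ (ext_tm _ _) t2 _ |- _ => apply: (tw_tm H) => //; by move=> [|n] end.
- have Hh : typing sig G0 (Hand A1 tr cls) (THand A1 B0) by constructor.
  match goal with Hc : forall o tO, cl_in o tO cls -> _, Hf : cl_find _ _ = Some _ |- _ =>
    have Hcl := Hc _ _ (cl_find_in Hf) end.
  eapply sub_tm0; last eassumption. eapply sub_tm0; first exact: Hcl. apply: (weak0).
  constructor; first by rewrite /wf_ty_ctx; apply: wf0; case: (sig_closed o).
  econstructor; [exact: weak0 Hh | eassumption].
- constructor; first eassumption.
  econstructor; [apply: (weak0); constructor; eassumption | eassumption].
Qed.
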